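(* There exist resource selection games in which all resources have the same strictly increasing delay function (i.e., $d_r=d$ for all $r\in R$ with $d$ strictly increasing), together with a social network $G=(N,E)$ and a starting state, such that there is an infinite sequence of states $s^0,s^1,s^2,\dots$ where each $s^{t+1}$ is obtained from $s^t$ by a weak considerate improving move of some coalition $C_t$ that is a clique in $G$.
   Context: Resource selection game: a finite set $N$ of players and a finite set $R$ of resources; every player's strategy set is $R$, and for each $r\in R$ there is a non-negative delay function $d_r:\{1,\dots,|N|\}\to\mathbb{N}$. A state is $s=(s_i)_{i\in N}$ with $s_i\in R$; $\ell_r(s)$ is the number of players choosing $r$; player $i$'s cost is $c_i(s)=d_{s_i}(\ell_{s_i}(s))$ and utility $u_i(s)=-c_i(s)$. For $C\subseteq N$ write $s=(s_C,s_{-C})$. Given an undirected graph $G=(N,E)$, $\mathcal{N}(C)=\{j\in N:\exists i\in C,\ \{i,j\}\in E\}$. A weak considerate improving move of coalition $C$ from state $s$ is a choice $s'_C$ such that $u_i(s'_C,s_{-C})\ge u_i(s)$ for all $i\in C\cup\mathcal{N}(C)$ and $u_i(s'_C,s_{-C})>u_i(s)$ for at least one $i\in C$; the resulting state is $(s'_C,s_{-C})$. *)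

(* Defs.v *)
From mathcomp Require Import all_boot all_order all_algebra.
Set Implicit Arguments. Unset Strict Implicit. Unset Printing Implicit Defensive.

Section RSG.
Variables (N R : finType).

Definition state := {ffun N -> R}.

Definition load (s : state) (r : R) : nat := #|[set i | s i == r]|.

Definition cost (d : R -> nat -> nat) (s : state) (i : N) : nat :=
  d (s i) (load s (s i)).

Definition utility (d : R -> nat -> nat) (s : state) (i : N) : int :=
  - (cost d s i)%:Z.

Definition simple_graph (E : rel N) : Prop :=
  (forall i j, E i j = E j i) /\ (forall i, ~~ E i i).

Definition nbhd (E : rel N) (C : {set N}) : {set N} :=
  [set j | [exists i in C, E i j]].

Definition is_clique (E : rel N) (C : {set N}) : Prop :=
  forall i j, i \in C -> j \in C -> i != j -> E i j.

Definition weak_considerate_move (d : R -> nat -> nat) (E : rel N)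
    (C : {set N}) (s s' : state) : Prop :=
  (forall j, j \notin C -> s' j = s j) /\
  (forall i, i \in C :|: nbhd E C -> utility d s i <= utility d s' i)%R /\
  (exists2 i, i \in C & (utility d s i < utility d s' i)%R).

End RSG.

(* Main.v *)
Require Import Defs.
From mathcomp Require Import all_boot all_order all_algebra.
Import Order.TTheory GRing.Theory Num.Theory.
Set Implicit Arguments. Unset Strict Implicit. Unset Printing Implicit Defensive.

Definition mkst (l : seq nat) : state 'I_8 'I_5 := [ffun i : 'I_8 => inord (nth 0 l i)].
Definition wf (l : seq nat) := (size l == 8) && all (fun x => x < 5) l.

Lemma mkstE l i : wf l -> val (mkst l i) = nth 0 l i.
Proof.
case/andP=> /eqP Hs /allP Ha; rewrite ffunE; apply: inordK.
by apply: Ha; rewrite mem_nth // Hs.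
Qed.

Lemma loadE l i : wf l -> load (mkst l) (mkst l i) = count (pred1 (nth 0 l i)) l.
Proof.
move=> Hw.
have El : l = map (fun j : 'I_8 => val (mkst l j)) (enum 'I_8).
  have Hs : size l = 8 by case/andP: Hw => /eqP.
  apply: (@eq_from_nth _ 0); first by rewrite size_map size_enum_ord.
  move=> k; rewrite Hs => Hk.
  rewrite (nth_map (Ordinal Hk)) ?size_enum_ord // mkstE //.
  by rewrite -(nth_map _ 0 val) ?size_enum_ord // val_enum_ord nth_iota.
rewrite -(mkstE i Hw) [X in count _ X]El count_map.
rewrite /load cardsE cardE /enum_mem size_filter (@eq_filter _ _ predT) ?filter_predT //.
Qed.

Definition edges : seq (nat * nat) :=
 [:: (0, 1); (0, 2); (0, 3); (0, 4); (1, 2); (1, 5); (1, 7); (3, 4); (3, 5); (3, 6); (5, 6); (5, 7)].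
Definition adjn (a b : nat) := ((a, b) \in edges) || ((b, a) \in edges).
Definition E8 : rel 'I_8 := fun i j => adjn i j.
Definition dd : nat -> nat := fun k => k.
Definition mkC (cl : seq nat) : {set 'I_8} := [set i : 'I_8 | nat_of_ord i \in cl].
Definition cnt l k := count (pred1 (nth 0 l k)) l.

Definition step_n l l' cl :=
 [&& all (fun k => (k \in cl) || (nth 0 l' k == nth 0 l k)) (iota 0 8),
     all (fun k => ~~((k \in cl) || has (fun c => adjn c k) cl) || (cnt l' k <= cnt l k)) (iota 0 8),
     has (fun k => cnt l' k < cnt l k) cl,
     all (fun a => all (fun b => (a == b) || adjn a b) cl) cl &
     all (fun k => k < 8) cl].

Lemma utilE l i : wf l -> utility (fun _ : 'I_5 => dd) (mkst l) i = (- (cnt l i)%:Z)%R.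
Proof. by move=> Hw; rewrite /utility /cost /dd loadE. Qed.

Lemma iota8 (i : 'I_8) : nat_of_ord i \in iota 0 8.
Proof. by rewrite mem_iota ltn_ord. Qed.

Lemma glue l l' cl : wf l -> wf l' -> step_n l l' cl ->
  is_clique E8 (mkC cl) /\
  weak_considerate_move (fun _ : 'I_5 => dd) E8 (mkC cl) (mkst l) (mkst l').
Proof.
move=> Hw Hw' /and5P[/allP H1 /allP H2 /hasP[k Hk Hlt] /allP H4 /allP H5].
split.
  move=> i j; rewrite !inE => Hi Hj Hij.
  have := allP (H4 _ Hi) _ Hj; rewrite /E8.
  by have -> : (nat_of_ord i == j) = false by apply/negbTE.
split.
  move=> j; rewrite inE => Hj; apply: val_inj; rewrite !mkstE //.
  by have := H1 _ (iota8 j); rewrite (negbTE Hj) => /eqP.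
split.
  move=> i Hi; rewrite !utilE // lerN2 lez_nat.
  have := H2 _ (iota8 i); case/orP => // /negP[].
  move: Hi; rewrite !inE => /orP[-> //|/existsP[j /andP[Hj Hji]]].
  apply/orP; right; apply/hasP; exists (nat_of_ord j) => //.
  by move: Hj; rewrite inE.
have Hk8 : k < 8 by exact: H5.
exists (Ordinal Hk8); first by rewrite inE.
by rewrite !utilE // ltrN2 ltz_nat.
Qed.

Definition sts : seq (seq nat) :=
 [:: [:: 0; 0; 1; 1; 2; 2; 3; 4]; [:: 1; 3; 0; 1; 2; 2; 3; 4]; [:: 4; 3; 0; 2; 1; 2; 3; 4];
     [:: 4; 3; 0; 0; 1; 3; 2; 4]; [:: 4; 4; 0; 0; 1; 1; 2; 3]; [:: 0; 2; 4; 0; 1; 1; 2; 3];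
     [:: 3; 2; 4; 1; 0; 1; 2; 3]; [:: 3; 2; 4; 4; 0; 2; 1; 3]; [:: 3; 3; 4; 4; 0; 0; 1; 2];
     [:: 4; 1; 3; 4; 0; 0; 1; 2]; [:: 2; 1; 3; 0; 4; 0; 1; 2]; [:: 2; 1; 3; 3; 4; 1; 0; 2];
     [:: 2; 2; 3; 3; 4; 4; 0; 1]; [:: 3; 0; 2; 3; 4; 4; 0; 1]; [:: 1; 0; 2; 4; 3; 4; 0; 1];
     [:: 1; 0; 2; 2; 3; 0; 4; 1]; [:: 1; 1; 2; 2; 3; 3; 4; 0]; [:: 2; 4; 1; 2; 3; 3; 4; 0];
     [:: 0; 4; 1; 3; 2; 3; 4; 0]; [:: 0; 4; 1; 1; 2; 4; 3; 0]].

Definition coals : seq (seq nat) :=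
 [:: [:: 0; 1; 2]; [:: 0; 3; 4]; [:: 3; 5; 6]; [:: 1; 5; 7]].

Definition L (t : nat) := nth [::] sts (t %% 20).
Definition CL (t : nat) := nth [::] coals (t %% 4).

Definition step_ok (t : nat) := [&& wf (L t), wf (L t.+1) & step_n (L t) (L t.+1) (CL t)].

Lemma all_steps : all step_ok (iota 0 20).
Proof. vm_compute. reflexivity. Qed.

Lemma step_mod t : step_ok t = step_ok (t %% 20).
Proof.
rewrite /step_ok /L /CL.
have h4 : t %% 4 = (t %% 20) %% 4 by rewrite modn_dvdm.
have h20 : t.+1 %% 20 = (t %% 20).+1 %% 20.
  by rewrite -addn1 -[in RHS]addn1 modnDml.
by rewrite h4 h20 modn_mod.
Qed.

Theorem theorem2 :
  exists (n m : nat) (d : nat -> nat) (E : rel 'I_n)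
         (s : nat -> state 'I_n 'I_m) (C : nat -> {set 'I_n}),
    (forall a b, 1 <= a -> a < b -> b <= n -> d a < d b) /\
    simple_graph E /\
    forall t, is_clique E (C t) /\
              weak_considerate_move (fun _ : 'I_m => d) E (C t) (s t) (s t.+1).
Proof.
exists 8, 5, dd, E8, (fun t => mkst (L t)), (fun t => mkC (CL t)).
split; first by move=> a b _ hab _.
split.
  split; first by move=> i j; rewrite /E8 /adjn orbC.
  by move=> i; rewrite /E8 /adjn orbb; case: i => -[|[|[|[|[|[|[|[|?]]]]]]]].
move=> t.
have : step_ok t.
  rewrite step_mod.
  have /allP := all_steps; apply; by rewrite mem_iota add0n ltn_mod.
by case/and3P=> h1 h2 h3; exact: glue.
Qed.
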